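(* Fix $n\ge 2$, a dictator agent $t\in\{1,\dots,n\}$ and a parameter $\varepsilon\in(0,\frac12)$, and let $g$ be any function assigning to each profile $\mathbf{x}\in\mathbb{R}^n$ a point $g(\mathbf{x})\in(-\infty,\,x_l-L)\cup(x_l+2L,\,+\infty)$, where $x_l=\min\mathbf{x}$, $x_r=\max\mathbf{x}$, $L=x_r-x_l$. Let $f$ be the mechanism that on $\mathbf{x}$ outputs $l_1=x_t$ and $$l_2=\begin{cases} x_t+\max\left\{\left(\tfrac{2}{\varepsilon}-2\right)(x_t-x_l),\; x_r-x_t\right\} & \text{if } x_t\in[x_l,\,x_l+\varepsilon L],\\[2pt] g(\mathbf{x}) & \text{if } x_t\in(x_l+\varepsilon L,\,x_l+(1-\varepsilon)L),\\[2pt] x_t-\max\left\{x_t-x_l,\; \left(\tfrac{2}{\varepsilon}-2\right)(x_r-x_t)\right\} & \text{if } x_t\in[x_l+(1-\varepsilon)L,\,x_r] \text{ and not in the first case}.\end{cases}$$ Then for every profile $\mathbf{x}\in\mathbb{R}^n$, $SC(f,\mathbf{x})\le\left(\frac{1}{\varepsilon}-1\right)(n-1)\,OPT(\mathbf{x})$.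
   Context: Two-facility game on a line: agent $i$ has location $x_i\in\mathbb{R}$. For facility locations $\{l_1,l_2\}$, an agent at $y$ has cost $\min\{|l_1-y|,|l_2-y|\}$. $SC(f,\mathbf{x})$ is the sum over all agents of their costs under $f(\mathbf{x})$, and $OPT(\mathbf{x})=\min_{l_1,l_2\in\mathbb{R}}\sum_i\min\{|l_1-x_i|,|l_2-x_i|\}$. *)

(* Defs.v *)
From HB Require Import structures.
From mathcomp Require Import all_boot all_order all_algebra.
From mathcomp Require Import all_classical all_reals.
Set Implicit Arguments. Unset Strict Implicit. Unset Printing Implicit Defensive.
Import Order.TTheory GRing.Theory Num.Theory.
Local Open Scope ring_scope.
Local Open Scope classical_set_scope.

Section Defs.
Variable R : realType.

Definition agent_cost (l : R * R) (y : R) : R :=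
  Num.min `|l.1 - y| `|l.2 - y|.

Definition cost (n : nat) (l : R * R) (x : 'I_n -> R) : R :=
  \sum_(i < n) agent_cost l (x i).

Definition SC (n : nat) (f : ('I_n -> R) -> R * R) (x : 'I_n -> R) : R :=
  cost (f x) x.

(* OPT(x) = min over l1 l2 in R of the social cost (as an infimum; it is attained) *)
Definition OPT (n : nat) (x : 'I_n -> R) : R :=
  inf (range (fun l : R * R => cost l x)).

(* x_l = min x, x_r = max x (seeded with the entry of some agent t, so the
   big operator ranges over a nonempty family) *)
Definition xmin (n : nat) (t : 'I_n) (x : 'I_n -> R) : R :=
  \big[Num.min/x t]_(i < n) x i.
Definition xmax (n : nat) (t : 'I_n) (x : 'I_n -> R) : R :=
  \big[Num.max/x t]_(i < n) x i.

Definition mech (n : nat) (t : 'I_n) (eps : R) (g : ('I_n -> R) -> R)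
    (x : 'I_n -> R) : R * R :=
  let xl := xmin t x in
  let xr := xmax t x in
  let L := xr - xl in
  let xt := x t in
  (xt,
   if (xl <= xt) && (xt <= xl + eps * L) then
     xt + Num.max ((2 / eps - 2) * (xt - xl)) (xr - xt)
   else if (xl + eps * L < xt) && (xt < xl + (1 - eps) * L) then g x
   else xt - Num.max (xt - xl) ((2 / eps - 2) * (xr - xt))).

End Defs.

(* Main.v *)
Require Import Defs.
From HB Require Import structures.
From mathcomp Require Import all_boot all_order all_algebra.
From mathcomp Require Import all_classical all_reals.
From mathcomp Require Import lra.
Import Order.TTheory GRing.Theory Num.Theory.
Local Open Scope ring_scope.

Ltac fin := first [ apply/orP; left; rewrite ler_norml; apply/andP; split; lra
                  | apply/orP; right; rewrite ler_norml; apply/andP; split; lra ].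

Lemma key (R : realType) (eps xl xr xt y c g : R) :
  0 < eps -> eps < 1/2 -> xl <= xt -> xt <= xr -> xl <= y -> y <= xr ->
  Num.min (xt - xl) (xr - xt) <= c -> Num.min (y - xl) (xr - y) <= c ->
  (g < xl - (xr - xl) \/ xl + 2*(xr-xl) < g) ->
  Num.min `|xt - y| `|(if (xl <= xt) && (xt <= xl + eps * (xr - xl)) then
     xt + Num.max ((2 / eps - 2) * (xt - xl)) (xr - xt)
   else if (xl + eps * (xr - xl) < xt) && (xt < xl + (1 - eps) * (xr - xl)) then g
   else xt - Num.max (xt - xl) ((2 / eps - 2) * (xr - xt))) - y|
  <= (1/eps - 1) * c.
Proof.
move=> e0 e2 h1 h2 h3 h4 H1 H2 Hg.
set m := 1/eps - 1.
have em : (m + 1) * eps = 1 by rewrite /m addrNK mul1r mulVf // gt_eqF.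
have km : 2 / eps - 2 = 2 * m by rewrite /m mulrBr mulr1 mulrA mulr1.
rewrite km.
have hm1 : 1 < m.
  have : 2 < 1 / eps by rewrite ltr_pdivlMr //; lra.
  rewrite /m; lra.
have hL : 0 <= xr - xl by lra.
have heL : eps * (xr - xl) <= (xr - xl) / 2.
  have := ler_wpM2r hL (ltW e2); lra.
have hc0 : 0 <= c.
  by apply: le_trans H1; rewrite le_min; apply/andP; split; lra.
have hmc : c <= m * c.
  have := ler_wpM2r hc0 (ltW hm1); lra.
move: H1 H2; rewrite !ge_min => /orP H1 /orP H2.
case: ifP => C1.
  move/andP: C1 => [_ C1].
  have hcd : xt - xl <= c by case: H1 => H1; lra.
  have hmd : m * (xt - xl) <= m * c by apply: ler_wpM2l; lra.
  case: (leP (2 * m * (xt - xl)) (xr - xt)) => hk.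
    case: (leP xt y) => hy; case: H2 => H2; fin.
  case: (leP xt y) => hy; case: (leP (y - xt) (m * (xt - xl))) => hz; fin.
case: ifP => C2.
  move/andP: C2 => [C2 C3].
  apply/orP; left; rewrite ler_norml; apply/andP.
  have Hmu : forall mu, eps * (xr - xl) <= mu -> mu <= c -> (xr - xl) - mu <= m * c.
    move=> mu hmu hmuc.
    have : (m+1) * (eps * (xr - xl)) <= (m+1) * mu by apply: ler_wpM2l; lra.
    rewrite mulrA em mul1r => hh.
    have : m * mu <= m * c by apply: ler_wpM2l; lra.
    lra.
  case: H1 => H1.
    have := Hmu (xt - xl) ltac:(lra) H1.
    have : xt - xl <= c := H1.
    case: (leP xt y) => hy; split; lra.
  have := Hmu (xr - xt) ltac:(lra) H1.
  case: (leP xt y) => hy; split; lra.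
have C1' : xl + eps * (xr - xl) < xt by move/negbT: C1; rewrite h1 /= -ltNge.
have C2' : xl + (1 - eps) * (xr - xl) <= xt.
  by move/negbT: C2; rewrite C1' /= -leNgt.
have hce : xr - xt <= c by case: H1 => H1; lra.
have hme : m * (xr - xt) <= m * c by apply: ler_wpM2l; lra.
case: (leP (xt - xl) (2 * m * (xr - xt))) => hk.
  case: (leP xt y) => hy; case: (leP (xt - y) (m * (xr - xt))) => hz; fin.
case: (leP xt y) => hy; case: H2 => H2; fin.
Qed.

Lemma three_pts (R : realType) (a b xp xq xr : R) :
  xp <= xq -> xq <= xr ->
  Num.min (xq - xp) (xr - xq) <=
  Num.min `|a - xp| `|b - xp| + Num.min `|a - xq| `|b - xq|
  + Num.min `|a - xr| `|b - xr|.
Proof.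
move=> h1 h2.
have n1 := ler_norm (a - xp); have n2 := ler_norm (b - xp).
have n3 := ler_norm (a - xq); have n4 := ler_norm (b - xq).
have n5 := ler_norm (a - xr); have n6 := ler_norm (b - xr).
have m1 := ler_norm (-(a - xp)); have m2 := ler_norm (-(b - xp)).
have m3 := ler_norm (-(a - xq)); have m4 := ler_norm (-(b - xq)).
have m5 := ler_norm (-(a - xr)); have m6 := ler_norm (-(b - xr)).
rewrite !normrN in m1 m2 m3 m4 m5 m6.
rewrite ge_min.
case: (leP `|a - xp| `|b - xp|) => c1;
case: (leP `|a - xq| `|b - xq|) => c2;
case: (leP `|a - xr| `|b - xr|) => c3;
first [apply/orP; left; lra | apply/orP; right; lra].
Qed.

Lemma cost_ge0 (R : realType) n (l : R * R) (x : 'I_n -> R) : 0 <= cost l x.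
Proof.
rewrite /cost; apply: sumr_ge0 => i _.
by rewrite /agent_cost le_min !normr_ge0.
Qed.

Lemma triple (R : realType) n (l : R * R) (x : 'I_n -> R) (p q r : 'I_n) :
  x p <= x q -> x q <= x r ->
  Num.min (x q - x p) (x r - x q) <= cost l x.
Proof.
move=> h1 h2.
have c0 := cost_ge0 R n l x.
case: (eqVneq p q) => [<-|pq].
  by rewrite subrr; apply: le_trans c0; rewrite ge_min lexx.
case: (eqVneq q r) => [<-|qr].
  by rewrite subrr; apply: le_trans c0; rewrite ge_min lexx orbT.
case: (eqVneq p r) => [epr|pr].
  have e : x q = x p by rewrite epr in h1 *; apply/eqP; rewrite eq_le h1 h2.
  by rewrite e subrr; apply: le_trans c0; rewrite ge_min lexx.
apply: le_trans (three_pts _ l.1 l.2 _ _ _ h1 h2) _.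
rewrite /cost (bigD1 p) //= (bigD1 q) 1?eq_sym //= (bigD1 r) /=; last first.
  by rewrite eq_sym pr eq_sym qr.
rewrite /agent_cost !addrA lerDl.
by apply: sumr_ge0 => i _; rewrite le_min !normr_ge0.
Qed.

Lemma xmin_ex (R : realType) n (t : 'I_n) (x : 'I_n -> R) :
  exists i, xmin t x = x i.
Proof.
rewrite /xmin; apply: (big_ind (fun v => exists i, v = x i)).
- by exists t.
- move=> u v [i ->] [j ->]; case: (leP (x i) (x j)) => _; [exists i | exists j]; done.
- by move=> i _; exists i.
Qed.

Lemma xmax_ex (R : realType) n (t : 'I_n) (x : 'I_n -> R) :
  exists i, xmax t x = x i.
Proof.
rewrite /xmax; apply: (big_ind (fun v => exists i, v = x i)).
- by exists t.
- move=> u v [i ->] [j ->]; case: (leP (x i) (x j)) => _; [exists j | exists i]; done.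
- by move=> i _; exists i.
Qed.

Theorem theorem6 (R : realType) (n : nat) (t : 'I_n) (eps : R)
  (g : ('I_n -> R) -> R) :
  (2 <= n)%N ->
  0 < eps -> eps < 1 / 2 ->
  (forall x : 'I_n -> R,
     g x < xmin t x - (xmax t x - xmin t x) \/
     xmin t x + 2 * (xmax t x - xmin t x) < g x) ->
  forall x : 'I_n -> R,
    SC (mech t eps g) x <= (1 / eps - 1) * (n.-1)%:R * OPT x.
Proof.
move=> hn e0 e2 Hg x.
have [il eil] := xmin_ex R n t x.
have [ir eir] := xmax_ex R n t x.
have lo : forall i, xmin t x <= x i by move=> i; exact: bigmin_le.
have hi : forall i, x i <= xmax t x by move=> i; exact: le_bigmax.
have hm1 : 1 < 1 / eps - 1.
  have : 2 < 1 / eps by rewrite ltr_pdivlMr //; lra.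
  lra.
set m := 1 / eps - 1 in hm1 *.
have hC : 0 < m * (n.-1)%:R.
  apply: mulr_gt0; first lra.
  by rewrite ltr0n -subn1 subn_gt0.
have main : forall l, SC (mech t eps g) x <= m * (n.-1)%:R * cost l x.
  move=> l.
  have per : forall i, agent_cost (mech t eps g x) (x i) <= m * cost l x.
    move=> i.
    rewrite /agent_cost /mech /=.
    apply: key => //; rewrite ?lo ?hi //.
    - by rewrite eil eir; apply: triple; rewrite -?eil -?eir.
    - by rewrite eil eir; apply: triple; rewrite -?eil -?eir.
  rewrite /SC /cost (bigD1 t) //=.
  have -> : agent_cost (mech t eps g x) (x t) = 0.
    by rewrite /agent_cost /mech /= subrr normr0 min_l // normr_ge0.
  rewrite add0r.
  apply: le_trans (ler_sum _ (fun i _ => per i)) _.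
  rewrite sumr_const cardC1 card_ord -(mulr_natr (m * cost l x)).
  by rewrite -/(cost l x) mulrAC.
set S := SC (mech t eps g) x.
have -> : S = m * (n.-1)%:R * (S / (m * (n.-1)%:R)).
  by rewrite mulrC divfK // gt_eqF.
apply: ler_wpM2l; first exact: ltW.
apply: lb_le_inf.
  by exists (cost (0, 0) x), (0, 0).
move=> v [l _ <-].
rewrite ler_pdivrMr // mulrC; exact: main.
Qed.
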